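(* Let $C$ be a nonempty closed convex subset of a real Banach space $X$ and let $a\in X$. Then $a$ is a weak internal point of $C$ if and only if $a\in C$ and $C$ is quasi-symmetric with respect to $a$.
   Context: The origin is a weak internal point of a closed convex set $A$ if for every $x\in A$ there exists $\delta=\delta(x)>0$ with $-\delta x\in A$; a point $a$ is a weak internal point of $C$ if the origin is a weak internal point of $C-a$. A closed convex set $A$ containing $0$ is quasi-symmetric if for every $r>0$ there exists $\theta=\theta(r)\in(0,1]$ such that $x\in A$, $\|x\|\le r$ implies $-\theta x\in A$; $C$ is quasi-symmetric with respect to $a\in C$ if $C-a$ is quasi-symmetric. *)

(* Defs.v *)
From HB Require Import structures.
From mathcomp Require Import all_boot all_order all_algebra.
From mathcomp Require Import all_classical all_reals all_analysis.
Set Implicit Arguments. Unset Strict Implicit. Unset Printing Implicit Defensive.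
Import Order.TTheory GRing.Theory Num.Theory.
Import numFieldNormedType.Exports.
Local Open Scope classical_set_scope.
Local Open Scope ring_scope.

Definition shift_set {R : realType} {X : normedModType R} (C : set X) (a : X) : set X :=
  [set x - a | x in C].

Definition origin_weak_internal {R : realType} {X : normedModType R} (A : set X) : Prop :=
  forall x, A x -> exists delta : R, 0 < delta /\ A (- (delta *: x)).

Definition weak_internal_point {R : realType} {X : normedModType R} (C : set X) (a : X) : Prop :=
  origin_weak_internal (shift_set C a).

Definition quasi_symmetric {R : realType} {X : normedModType R} (A : set X) : Prop :=
  A 0 /\ forall r : R, 0 < r -> exists theta : R, 0 < theta /\ theta <= 1 /\
    forall x, A x -> `|x| <= r -> A (- (theta *: x)).

Definition quasi_symmetric_wrt {R : realType} {X : normedModType R} (C : set X) (a : X) : Prop :=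
  quasi_symmetric (shift_set C a).

(* Main.v *)
Require Import Defs.
From HB Require Import structures.
From mathcomp Require Import all_boot all_order all_algebra.
From mathcomp Require Import all_classical all_reals all_analysis.
From mathcomp Require Import ring lra.
Import Order.TTheory GRing.Theory Num.Theory.
Import numFieldNormedType.Exports.
Local Open Scope classical_set_scope.
Local Open Scope ring_scope.

Section H.
Context {R : realType} {X : normedModType R}.

Lemma shiftE (C : set X) a w : shift_set C a w <-> C (w + a).
Proof.
split; first by case=> x Cx <-; rewrite subrK.
by move=> Cw; exists (w + a) => //; rewrite addrK.
Qed.

Lemma shift_closed (C : set X) a : closed C -> closed (shift_set C a).
Proof.
move=> cC.
have -> : shift_set C a = (fun w => w + a) @^-1` C.
  by rewrite predeqE => w; rewrite shiftE.
apply: preimage_closed => // x _.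
apply: continuousD => //; exact: cst_continuous.
Qed.

Lemma conv_mem (A : set X) (hcv : convex_set (A : set (convex_lmodType X))) x y t :
  A x -> A y -> 0 <= t -> t <= 1 -> A (t *: x + (1 - t) *: y).
Proof.
move=> Ax Ay t0 t1.
have := hcv x y (Itv01 t0 t1).
rewrite !inE => /(_ Ax Ay).
done.
Qed.
End H.

Lemma baire_closed {R : realType} {X : completeNormedModType R} (S : set X)
  (F : nat -> set X) (s0 : X) :
  closed S -> S s0 -> (forall n, closed (F n)) -> (forall x, S x -> exists n, F n x) ->
  exists n y e, 0 < e /\ S y /\ forall z, S z -> `|z - y| < e -> F n z.
Proof.
move=> cS Ss0 cF cov.
have [//|H] := pselect (exists n y e, 0 < e /\ S y /\ forall z, S z -> `|z - y| < e -> F n z).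
have step n y e : 0 < e -> S y -> exists z, [/\ S z, `|z - y| < e & ~ F n z].
  move=> e0 Sy; apply: contrapT => nz; apply: H; exists n, y, e; split => //; split => //.
  move=> z Sz lt; apply: contrapT => nF; apply: nz; by exists z.
have step2 n (y : X) (e : R) : 0 < e -> S y -> exists z : X, exists e' : R,
   [/\ S z, 0 < e', e' <= e / 4, e' <= n.+1%:R^-1 &
     `|z - y| < e / 2 /\ forall w, `|w - z| <= e' -> ~ F n w].
  move=> e0 Sy; have [z [Sz zy nFz]] := step n y (e / 2) (divr_gt0 e0 (ltr0Sn _ 1)) Sy.
  have : nbhs z (~` F n) by apply: open_nbhs_nbhs; split => //; exact: closed_openC.
  move=> /nbhs_ballP[d d0 bd].
  exists z, (Num.min (Num.min (d / 2) (e / 4)) n.+1%:R^-1); split => //.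
  - by rewrite !lt_min !divr_gt0 // invr_gt0 ltr0Sn.
  - by rewrite !ge_min lexx orbT.
  - by rewrite !ge_min lexx orbT.
  split => // w wz; apply: bd; rewrite -ball_normE /ball_ /= distrC.
  have hd : Num.min (Num.min (d / 2) (e / 4)) n.+1%:R^-1 <= d / 2.
    by rewrite !ge_min lexx.
  have := le_trans wz hd; have : (0:R) < d := d0; lra.
have Ar : forall p : nat * (X * R), exists q : X * R,
    (S p.2.1 /\ 0 < p.2.2) ->
    [/\ S q.1, 0 < q.2, q.2 <= p.2.2 / 4, q.2 <= p.1.+1%:R^-1 &
     `|q.1 - p.2.1| < p.2.2 / 2 /\ forall w, `|w - q.1| <= q.2 -> ~ F p.1 w].
  move=> [n [y e]] /=.
  have [[Sy e0]|] := pselect (S y /\ 0 < e); last first.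
    by move=> nh; exists (y, e) => /= h; exfalso; apply: nh.
  by have [z [e' h]] := step2 n y e e0 Sy; exists (z, e') => _.
have [f Pf] := choice Ar.
pose fix ar n := if n is p.+1 then f (p, ar p) else (s0, 1).
have inv n : S (ar n).1 /\ 0 < (ar n).2.
  elim: n => [|n [IH1 IH2]] /=; first by split.
  by have [] := Pf (n, ar n) (conj IH1 IH2).
have rel n := Pf (n, ar n) (inv n).
pose y n := (ar n).1. pose e n := (ar n).2.
have claim k n : `|y (n + k)%N - y n| < e n.
  elim: k n => [|k IH] n; first by rewrite addn0 subrr normr0; exact: (inv n).2.
  rewrite -addSnnS.
  have [_ _ e4 _ [yn _]] := rel n.
  have -> : y (n.+1 + k)%N - y n = (y (n.+1 + k)%N - y n.+1) + (y n.+1 - y n).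
    by rewrite addrA subrK.
  apply: (le_lt_trans (ler_normD _ _)).
  have h1 := IH n.+1.
  have h2 : e n.+1 <= e n / 4 by exact: e4.
  have en := (inv n).2.
  have h3 : `|y n.+1 - y n| < e n / 2 by exact: yn.
  rewrite /e in h1 h2 h3 en *. lra.
have : cvg (y @ \oo).
  suff : cauchy (y @ \oo) by exact: cauchy_cvg.
  suff : cauchy_ex (y @ \oo) by exact: cauchy_exP.
  move=> eps eps0; rewrite /fmapE -ball_normE /ball_.
  have [n n1e] : exists n, n.+1%:R^-1 < eps.
    exists (Num.truncn eps^-1).
    by rewrite -ltf_pV2 ?(posrE,divr_gt0)// invrK truncnS_gt.
  exists (y n.+1), n.+1 => // m nm /=.
  have := claim (m - n.+1)%N n.+1; rewrite subnKC //.
  have [_ _ _ h _] := rel n.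
  move=> h'; rewrite distrC; apply: (lt_le_trans h'); apply: (le_trans h); exact: ltW.
rewrite cvg_ex /= => -[l Hl].
have lS : S l.
  apply: (@closed_cvg _ _ \oo eventually_filter y) => //.
  by apply: nearW => m; exact: (inv m).1.
have lball n : `|y n - l| <= e n.
  have e0 := (inv n).2.
  have : closed_ball (y n) (e n) l.
    apply: (@closed_cvg _ _ \oo eventually_filter y) => //.
      exact: closed_ball_closed.
    exists n => // m /= nm; rewrite closed_ballE // /closed_ball_ /=.
    have := claim (m - n)%N n; rewrite subnKC // distrC => h; exact: ltW.
  by rewrite closed_ballE.
have [n Fnl] := cov l lS.
have [_ _ _ _ [_ nF]] := rel n.
exfalso; apply: (nF l _ Fnl); rewrite distrC; exact: (lball n.+1).
Qed.

Lemma scale_alg {R : realType} {X : normedModType R} (x y : X) (c t : R) :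
  (2^-1) *: (- (c *: (t *: x + (1 - t) *: y))) + (1 - 2^-1) *: ((c * (1 - t)) *: y)
  = - ((c * t / 2) *: x).
Proof.
have -> : (1 - 2^-1 : R) = 2^-1 by field.
rewrite scalerDr opprD scalerDr !scalerA scalerN [2^-1 *: - _]scalerN !scalerA subrK.
by congr (- (_ *: _)); rewrite mulrC.
Qed.

Theorem mainTheorem5 (R : realType) (X : completeNormedModType R) (C : set X) (a : X)
  (hne : C !=set0) (hcl : closed C) (hcv : convex_set (C : set (convex_lmodType X))) :
  weak_internal_point C a <-> (C a /\ quasi_symmetric_wrt C a).
Proof.
rewrite /weak_internal_point /quasi_symmetric_wrt.
set A := shift_set C a.
have hA w : A w <-> C (w + a) by exact: shiftE.
have cA : closed A by exact: shift_closed.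
have cvA x y t : A x -> A y -> 0 <= t -> t <= 1 -> A (t *: x + (1 - t) *: y).
  move=> /hA Ax /hA Ay t0 t1; apply/hA.
  have := @conv_mem _ _ C hcv _ _ _ Ax Ay t0 t1.
  suff -> : t *: (x + a) + (1 - t) *: (y + a) = t *: x + (1 - t) *: y + a by [].
  by rewrite !scalerDr addrACA -scalerDl [t + _]addrC subrK scale1r.
split; last first.
  move=> [Ca [A0 qs]] x Ax.
  have r0 : 0 < `|x| + 1 by rewrite ltr_wpDl.
  have [th [th0 [th1 f]]] := qs _ r0.
  exists th; split => //; apply: f => //; rewrite lerDl //.
move=> hw.
have A0 : A 0.
  have [c Cc] := hne.
  have Ax : A (c - a) by apply/hA; rewrite subrK.
  have [d [d0 Ad]] := hw _ Ax.
  have d1 : 1 + d != 0 by rewrite gt_eqF // ltr_wpDr // ltW.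
  have t0 : 0 <= d / (1 + d) by rewrite divr_ge0 // ?ltW // ltr_wpDr // ltW.
  have t1 : d / (1 + d) <= 1 by rewrite ler_pdivrMr ?mul1r ?lerDr // ltr_wpDr // ltW.
  have := cvA _ _ _ Ax Ad t0 t1.
  rewrite scalerN scalerA -scalerBl.
  have -> : d / (1 + d) - (1 - d / (1 + d)) * d = 0 by field.
  by rewrite scale0r.
have sc y s : A y -> 0 <= s -> s <= 1 -> A (s *: y).
  move=> Ay s0 s1; have := cvA _ _ _ Ay A0 s0 s1.
  by rewrite scaler0 addr0.
split; first by have := (hA 0).1 A0; rewrite add0r.
split => // r r0.
pose S := A `&` closed_ball 0 r.
have SE w : S w <-> A w /\ `|w| <= r.
  rewrite /S /= closed_ballE // /closed_ball_ /= sub0r normrN.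
  by [].
have cS : closed S by apply: closedI => //; exact: closed_ball_closed.
pose F n := [set w : X | A (- (n.+1%:R^-1 *: w))].
have cF n : closed (F n).
  apply: preimage_closed => // x _; apply: continuousN; exact: scaler_continuous.
have cov x : S x -> exists n, F n x.
  move=> /SE[Ax _]; have [d [d0 Ad]] := hw _ Ax.
  have [n n1e] : exists n, n.+1%:R^-1 < d.
    exists (Num.truncn d^-1).
    by rewrite -ltf_pV2 ?(posrE,divr_gt0)// invrK truncnS_gt.
  exists n; rewrite /F /=.
  have -> : - (n.+1%:R^-1 *: x) = (n.+1%:R^-1 / d) *: (- (d *: x)).
    by rewrite scalerN scalerA divfK // gt_eqF.
  apply: sc => //; first by rewrite divr_ge0 // ltW.
  by rewrite ler_pdivrMr // mul1r ltW.
have S0 : S 0 by apply/SE; rewrite normr0 ltW.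
have [n [y [e [e0 [Sy loc]]]]] := @baire_closed _ _ S F 0 cS S0 cF cov.
have [Ay ny] := (SE y).1 Sy.
pose c : R := n.+1%:R^-1.
have c0 : 0 < c by rewrite /c invr_gt0.
have c1 : c <= 1 by rewrite /c invf_le1 ?ler1n ?ltr0Sn.
pose t : R := e / (2 * r + e).
have den : 0 < 2 * r + e by lra.
have t0 : 0 < t by rewrite /t divr_gt0.
have t1 : t < 1 by rewrite /t ltr_pdivrMr // mul1r; lra.
have t2 : t * (2 * r) < e.
  rewrite /t mulrAC ltr_pdivrMr //; nra.
clearbody t.
exists (c * t / 2); split; first by rewrite divr_gt0 // mulr_gt0.
split; first by rewrite ler_pdivrMr // mul1r; nra.
move=> x Ax nx.
pose z := t *: x + (1 - t) *: y.
have Az : A z by apply: cvA => //; lra.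
have nz : `|z| <= r.
  have n1t : 0 <= 1 - t by lra.
  apply: (le_trans (ler_normD _ _)); rewrite !normrZ (ger0_norm (ltW t0)) (ger0_norm n1t).
  have h1 : t * `|x| <= t * r by rewrite ler_pM2l.
  have h2 : (1 - t) * `|y| <= (1 - t) * r by rewrite ler_pM2l // subr_gt0.
  lra.
have zy : `|z - y| < e.
  have -> : z - y = t *: (x - y).
    by rewrite /z scalerBl scale1r scalerBr addrCA addrC addrK.
  rewrite normrZ (ger0_norm (ltW t0)).
  apply: le_lt_trans t2; rewrite ler_pM2l //.
  apply: (le_trans (ler_normB _ _)); lra.
have Fz := loc z ((SE z).2 (conj Az nz)) zy.
have As : A ((c * (1 - t)) *: y).
  apply: sc => //; first by rewrite mulr_ge0 //; lra.
  nra.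
have := cvA _ _ (2^-1) Fz As.
rewrite scale_alg; apply => //; lra.
Qed.
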